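(* Let $f:S^{1}\rightarrow Y_{1}$ be any map. Then $f$ is inessential (null-homotopic) in $HA$ if and only if there exists $N$ such that $f$ is inessential in $Y^{N}$.
   Context: For $n\in\{1,2,3,\dots\}$ let $X_{n}\subset\mathbb{R}^{2}$ be the circle of radius $\frac{1}{n}$ centered at $(\frac{1}{n},0)$, and let $Y_{n}=\bigcup_{i=n}^{\infty}X_{i}$ (so $Y_1$ is the Hawaiian earring). Let $A_{n}\subset\mathbb{R}^{2}$ be the closed pinched annulus bounded by $X_{n}\cup X_{n+1}$, and let $Y^{n}=Y_{1}\cup A_{1}\cup\dots\cup A_{n}$ with the subspace topology from $\mathbb{R}^{2}$. The harmonic archipelago $HA$ has underlying set $\bigcup_{n=1}^{\infty}Y^{n}$, with a topology such that each $Y^{n}$ inherits its usual (Euclidean subspace) topology and moreover: (1) there is a sequence $z_{n}\in\operatorname{int}(A_{n})$ such that $\{z_{1},z_{2},\dots\}$ has no subsequential limit in $HA$, and (2) if $p\in HA$ is a subsequential limit of a sequence $y_{1},y_{2},\dots$ with $y_{n}\in\operatorname{int}(A_{n})$ for all $n$, then $p=(0,0)$. Here $Y_1\subset Y^N\subset HA$. *)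

(* Defs.v *)
From Stdlib Require Import Reals Lra.
Open Scope R_scope.

Definition pt := (R * R)%type.
Definition pt3 := ((R * R) * R)%type.

Definition dist2 (p q : pt) : R :=
  sqrt ((fst p - fst q)^2 + (snd p - snd q)^2).
Definition dist3 (x y : pt3) : R :=
  sqrt ((fst (fst x) - fst (fst y))^2 + (snd (fst x) - snd (fst y))^2
        + (snd x - snd y)^2).

Definition X (n : nat) (p : pt) : Prop :=
  (fst p - / INR n)^2 + (snd p)^2 = (/ INR n)^2.

Definition Y (n : nat) (p : pt) : Prop := exists i, (n <= i)%nat /\ (1 <= i)%nat /\ X i p.

Definition A (n : nat) (p : pt) : Prop :=
  (fst p - / INR n)^2 + (snd p)^2 <= (/ INR n)^2 /\
  (/ INR (S n))^2 <= (fst p - / INR (S n))^2 + (snd p)^2.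

Definition intA (n : nat) (p : pt) : Prop :=
  (fst p - / INR n)^2 + (snd p)^2 < (/ INR n)^2 /\
  (/ INR (S n))^2 < (fst p - / INR (S n))^2 + (snd p)^2.

Definition Yup (N : nat) (p : pt) : Prop :=
  Y 1 p \/ exists i, (1 <= i)%nat /\ (i <= N)%nat /\ A i p.

Definition HAset (p : pt) : Prop := exists N, (1 <= N)%nat /\ Yup N p.

Definition is_topology_on (S : pt -> Prop) (O : (pt -> Prop) -> Prop) : Prop :=
  (forall U, O U -> forall p, U p -> S p) /\
  O (fun _ => False) /\ O S /\
  (forall U V, O U -> O V -> O (fun p => U p /\ V p)) /\
  (forall F : (pt -> Prop) -> Prop, (forall U, F U -> O U) ->
     O (fun p => exists U, F U /\ U p)).

Definition euc_rel_open (S V : pt -> Prop) : Prop :=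
  (forall p, V p -> S p) /\
  forall p, V p -> exists e, 0 < e /\ forall q, S q -> dist2 p q < e -> V q.

Definition inherits_euclidean (O : (pt -> Prop) -> Prop) (S : pt -> Prop) : Prop :=
  forall V : pt -> Prop, (forall p, V p -> S p) ->
    ((exists U, O U /\ forall p, V p <-> (U p /\ S p)) <-> euc_rel_open S V).

Definition subseq_limit (O : (pt -> Prop) -> Prop) (z : nat -> pt) (p : pt) : Prop :=
  exists phi : nat -> nat, (1 <= phi 0%nat)%nat /\
    (forall k, (phi k < phi (S k))%nat) /\
    forall U, O U -> U p -> exists K, forall k, (K <= k)%nat -> U (z (phi k)).

Definition HA_cond1 (O : (pt -> Prop) -> Prop) : Prop :=
  exists z : nat -> pt, (forall n, (1 <= n)%nat -> intA n (z n)) /\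
    forall p, HAset p -> ~ subseq_limit O z p.

Definition HA_cond2 (O : (pt -> Prop) -> Prop) : Prop :=
  forall (y : nat -> pt) (p : pt), (forall n, (1 <= n)%nat -> intA n (y n)) ->
    HAset p -> subseq_limit O y p -> p = (0, 0).

Definition HA_topology (O : (pt -> Prop) -> Prop) : Prop :=
  is_topology_on HAset O /\
  (forall n, (1 <= n)%nat -> inherits_euclidean O (Yup n)) /\
  HA_cond1 O /\ HA_cond2 O.

Definition S1 (z : pt) : Prop := (fst z)^2 + (snd z)^2 = 1.
Definition cyl (x : pt3) : Prop := S1 (fst x) /\ 0 <= snd x <= 1.

Definition cont_S1 (f : pt -> pt) : Prop :=
  forall z, S1 z -> forall e, 0 < e -> exists d, 0 < d /\
    forall w, S1 w -> dist2 z w < d -> dist2 (f z) (f w) < e.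

Definition cont_cyl_euc (H : pt3 -> pt) : Prop :=
  forall x, cyl x -> forall e, 0 < e -> exists d, 0 < d /\
    forall y, cyl y -> dist3 x y < d -> dist2 (H x) (H y) < e.

Definition cont_cyl_top (O : (pt -> Prop) -> Prop) (H : pt3 -> pt) : Prop :=
  forall U, O U -> forall x, cyl x -> U (H x) -> exists d, 0 < d /\
    forall y, cyl y -> dist3 x y < d -> U (H y).

Definition inessential_euc (S : pt -> Prop) (f : pt -> pt) : Prop :=
  exists (H : pt3 -> pt) (c : pt), S c /\ cont_cyl_euc H /\
    (forall x, cyl x -> S (H x)) /\
    (forall z, S1 z -> H (z, 0) = f z) /\
    (forall z, S1 z -> H (z, 1) = c).

Definition inessential_HA (O : (pt -> Prop) -> Prop) (f : pt -> pt) : Prop :=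
  exists (H : pt3 -> pt) (c : pt), HAset c /\ cont_cyl_top O H /\
    (forall x, cyl x -> HAset (H x)) /\
    (forall z, S1 z -> H (z, 0) = f z) /\
    (forall z, S1 z -> H (z, 1) = c).

(* Main.v *)
From Stdlib Require Import Reals Lra Lia Psatz Classical ClassicalEpsilon ZArith.
From Coquelicot Require Import Coquelicot.
Require Import Defs.
From Stdlib Require Import Reals.
Open Scope R_scope.

Lemma sq_sqrt_lt : forall a e, 0 <= a -> 0 < e -> a < e * e -> sqrt a < e.
Proof.
  intros a e Ha He H. rewrite <- (sqrt_square e) by lra.
  apply sqrt_lt_1_alt. lra.
Qed.

Lemma sqrt_lt_sq : forall a e, 0 <= a -> 0 < e -> sqrt a < e -> a < e * e.
Proof.
  intros a e Ha He H.
  assert (Hs := sqrt_sqrt a Ha). assert (0 <= sqrt a) by apply sqrt_pos.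
  nra.
Qed.

Lemma d2_lt : forall p q e, 0 < e ->
  (fst p - fst q)^2 + (snd p - snd q)^2 < e * e -> dist2 p q < e.
Proof. intros. unfold dist2. apply sq_sqrt_lt; [|assumption|assumption]. pose proof (pow2_ge_0 (fst p - fst q)); pose proof (pow2_ge_0 (snd p - snd q)); lra. Qed.

Lemma d2_lt_inv : forall p q e, 0 < e -> dist2 p q < e ->
  (fst p - fst q)^2 + (snd p - snd q)^2 < e * e.
Proof. intros. unfold dist2 in *. apply sqrt_lt_sq; [|assumption|assumption]. pose proof (pow2_ge_0 (fst p - fst q)); pose proof (pow2_ge_0 (snd p - snd q)); lra. Qed.

Lemma d2_ge0 : forall p q, 0 <= dist2 p q.
Proof. intros; apply sqrt_pos. Qed.

Lemma d2_sym : forall p q, dist2 p q = dist2 q p.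
Proof. intros; unfold dist2; f_equal; ring. Qed.

Lemma d2_refl : forall p, dist2 p p = 0.
Proof. intros; unfold dist2. replace ((fst p - fst p)^2 + (snd p - snd p)^2) with 0 by ring. apply sqrt_0. Qed.

Lemma d2_sq : forall p q, dist2 p q * dist2 p q = (fst p - fst q)^2 + (snd p - snd q)^2.
Proof. intros; unfold dist2; apply sqrt_sqrt. pose proof (pow2_ge_0 (fst p - fst q)); pose proof (pow2_ge_0 (snd p - snd q)); lra. Qed.

Lemma d2_fst : forall p q, Rabs (fst p - fst q) <= dist2 p q.
Proof.
  intros. assert (H:=d2_sq p q). assert (H0:=d2_ge0 p q).
  apply Rsqr_incr_0_var; auto. rewrite <- Rsqr_abs. unfold Rsqr. pose proof (pow2_ge_0 (fst p - fst q)); pose proof (pow2_ge_0 (snd p - snd q)); nra.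
Qed.

Lemma d2_snd : forall p q, Rabs (snd p - snd q) <= dist2 p q.
Proof.
  intros. assert (H:=d2_sq p q). assert (H0:=d2_ge0 p q).
  apply Rsqr_incr_0_var; auto. rewrite <- Rsqr_abs. unfold Rsqr. pose proof (pow2_ge_0 (fst p - fst q)); pose proof (pow2_ge_0 (snd p - snd q)); nra.
Qed.

Lemma d2_le_sum : forall p q, dist2 p q <= Rabs (fst p - fst q) + Rabs (snd p - snd q).
Proof.
  intros. assert (H:=d2_sq p q). assert (H0:=d2_ge0 p q).
  apply Rsqr_incr_0_var. 2: { assert (0 <= Rabs (fst p - fst q)) by apply Rabs_pos.
   assert (0 <= Rabs (snd p - snd q)) by apply Rabs_pos. lra. }
  unfold Rsqr. rewrite H.
  assert (Rabs (fst p - fst q) * Rabs (fst p - fst q) = (fst p - fst q)^2).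
  { rewrite <- Rabs_mult. rewrite Rabs_right; [ring| apply Rle_ge, Rle_0_sqr]. }
  assert (Rabs (snd p - snd q) * Rabs (snd p - snd q) = (snd p - snd q)^2).
  { rewrite <- Rabs_mult. rewrite Rabs_right; [ring| apply Rle_ge, Rle_0_sqr]. }
  assert (0 <= Rabs (fst p - fst q)) by apply Rabs_pos.
  assert (0 <= Rabs (snd p - snd q)) by apply Rabs_pos. nra.
Qed.

Lemma d2_tri : forall p q r, dist2 p r <= dist2 p q + dist2 q r.
Proof.
  intros. assert (H1:=d2_sq p q). assert (H2:=d2_sq q r). assert (H3:=d2_sq p r).
  assert (A:=d2_ge0 p q). assert (B:=d2_ge0 q r). assert (C:=d2_ge0 p r).
  apply Rsqr_incr_0_var; [|lra]. unfold Rsqr.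
  set (a1 := fst p - fst q) in *. set (b1 := snd p - snd q) in *.
  set (a2 := fst q - fst r) in *. set (b2 := snd q - snd r) in *.
  assert (E: (fst p - fst r) = a1 + a2) by (unfold a1, a2; ring).
  assert (F: (snd p - snd r) = b1 + b2) by (unfold b1, b2; ring).
  rewrite E, F in H3.
  assert (CS: a1*a2 + b1*b2 <= dist2 p q * dist2 q r).
  { destruct (Rle_dec (a1*a2+b1*b2) 0). nra.
    apply Rsqr_incr_0_var; [|nra]. unfold Rsqr.
    replace (dist2 p q * dist2 q r * (dist2 p q * dist2 q r)) with
      ((dist2 p q * dist2 p q) * (dist2 q r * dist2 q r)) by ring.
    rewrite H1, H2. pose proof (pow2_ge_0 (a1*b2 - a2*b1)). nra. }
  nra.
Qed.

Lemma disk_norm : forall q r, 0 < r -> (fst q - r)^2 + (snd q)^2 <= r^2 ->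
  dist2 (0,0) q <= 2 * r.
Proof.
  intros q r Hr H. assert (H1:=d2_sq (0,0) q). assert (H0:=d2_ge0 (0,0) q).
  simpl in H1. apply Rsqr_incr_0_var; [|lra]. unfold Rsqr. rewrite H1. nra.
Qed.

Definition ctp (g : pt -> pt) (p : pt) := forall e, 0 < e -> exists d, 0 < d /\
  forall q, dist2 p q < d -> dist2 (g p) (g q) < e.

Lemma cont_to_eps (g : R*R -> R) p : continuous g p -> forall e, 0<e -> exists d, 0<d /\
  forall q, dist2 p q < d -> Rabs (g q - g p) < e.
Proof.
  intros Hc e He.
  destruct (Hc (fun y => ball (g p) e y) (locally_ball (g p) (mkposreal e He))) as [eps Heps].
  exists eps. split; [apply cond_pos|]. intros q Hq.
  assert (B : ball p eps q).
  { split; unfold ball; simpl; unfold AbsRing_ball, abs, minus, plus, opp; simpl.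
    - pose proof (d2_fst p q). rewrite Rabs_minus_sym in H. unfold Rminus in H. lra.
    - pose proof (d2_snd p q). rewrite Rabs_minus_sym in H. unfold Rminus in H. lra. }
  specialize (Heps q B). revert Heps. unfold ball; simpl; unfold AbsRing_ball, abs, minus, plus, opp; simpl.
  unfold Rminus. auto.
Qed.

Lemma ctp_of (g : R*R -> R*R) p : continuous (fun q => fst (g q)) p ->
  continuous (fun q => snd (g q)) p -> ctp g p.
Proof.
  intros H1 H2 e He.
  destruct (cont_to_eps _ _ H1 (e/2)) as [d1 [Hd1 P1]]; [lra|].
  destruct (cont_to_eps _ _ H2 (e/2)) as [d2 [Hd2 P2]]; [lra|].
  exists (Rmin d1 d2). split. apply Rmin_pos; auto.
  intros q Hq. pose proof (Rmin_l d1 d2). pose proof (Rmin_r d1 d2).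
  specialize (P1 q ltac:(lra)). specialize (P2 q ltac:(lra)).
  pose proof (d2_le_sum (g p) (g q)).
  rewrite Rabs_minus_sym in P1, P2. lra.
Qed.

Section CR.
Implicit Types f g : R * R -> R.
Lemma cR_plus f g p : continuous f p -> continuous g p -> continuous (fun q => f q + g q) p.
Proof. intros. exact (continuous_plus f g p H H0). Qed.
Lemma cR_mult f g p : continuous f p -> continuous g p -> continuous (fun q => f q * g q) p.
Proof. intros. exact (continuous_mult f g p H H0). Qed.
Lemma cR_opp f p : continuous f p -> continuous (fun q => - f q) p.
Proof. intros. exact (continuous_opp f p H). Qed.
Lemma cR_minus f g p : continuous f p -> continuous g p -> continuous (fun q => f q - g q) p.
Proof. intros. unfold Rminus. apply cR_plus; auto. apply cR_opp; auto. Qed.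
Lemma cR_inv f p : continuous f p -> f p <> 0 -> continuous (fun q => / f q) p.
Proof. intros. exact (continuous_comp f Rinv p H (continuous_Rinv (f p) H0)). Qed.
Lemma cR_div f g p : continuous f p -> continuous g p -> g p <> 0 -> continuous (fun q => f q / g q) p.
Proof. intros. unfold Rdiv. apply cR_mult; auto. apply cR_inv; auto. Qed.
Lemma cR_const (c : R) (p : R*R) : continuous (fun _ : R*R => c) p.
Proof. apply continuous_const. Qed.
Lemma cR_fst (p : R*R) : continuous (fun q : R*R => fst q) p.
Proof. destruct p. apply continuous_fst. Qed.
Lemma cR_snd (p : R*R) : continuous (fun q : R*R => snd q) p.
Proof. destruct p. apply continuous_snd. Qed.
End CR.

Definition rho (q : pt) := fst q * fst q + snd q * snd q.
Definition uu (q : pt) := fst q / rho q.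
Definition vv (q : pt) := snd q / rho q.
Definition inv2 (q : pt) : pt := (uu q, vv q).
Definition Dn (c b h s t : R) := c*c*(s*s) + (b*s+h*t)*(b*s+h*t).
Definition Fc (c b h s t : R) : pt :=
  (c*(s*s) / Dn c b h s t, s*(b*s+h*t) / Dn c b h s t).

Lemma rho_pos : forall q, q <> (0,0) -> 0 < rho q.
Proof.
  intros [x y] H. unfold rho; simpl.
  destruct (Req_dec x 0); destruct (Req_dec y 0); subst; try (exfalso; now apply H).
  - nra. - nra. - nra.
Qed.

Lemma rho_inv2 : forall q, q <> (0,0) -> rho (inv2 q) = / rho q.
Proof.
  intros q H. pose proof (rho_pos q H). unfold inv2, uu, vv. unfold rho at 1. simpl.
  unfold rho in *. field. lra.
Qed.

Lemma inv2_inv2 : forall q, q <> (0,0) -> inv2 (inv2 q) = q.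
Proof.
  intros q H. pose proof (rho_pos q H).
  unfold inv2 at 1. unfold uu at 1, vv at 1. rewrite rho_inv2 by auto.
  destruct q as [x y]. unfold inv2, uu, vv; simpl. f_equal; field; lra.
Qed.

Lemma cont_rho : forall p, continuous rho p.
Proof. intros. unfold rho. apply cR_plus; apply cR_mult; (apply cR_fst || apply cR_snd). Qed.

Lemma cont_uu : forall p, p <> (0,0) -> continuous uu p.
Proof. intros. unfold uu. apply cR_div. apply cR_fst. apply cont_rho. pose proof (rho_pos p H); lra. Qed.
Lemma cont_vv : forall p, p <> (0,0) -> continuous vv p.
Proof. intros. unfold vv. apply cR_div. apply cR_snd. apply cont_rho. pose proof (rho_pos p H); lra. Qed.

Ltac ctac := repeat (lazymatch goal with
  | |- continuous (fun q => _ / _) _ => apply cR_div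
  | |- continuous (fun q => _ + _) _ => apply cR_plus
  | |- continuous (fun q => _ - _) _ => apply cR_minus
  | |- continuous (fun q => _ * _) _ => apply cR_mult
  | |- continuous (fun q => - _) _ => apply cR_opp
  | |- continuous (fun q => fst q) _ => apply cR_fst
  | |- continuous (fun q => snd q) _ => apply cR_snd
  | |- continuous _ _ => first [assumption | apply cR_const]
  end).


Lemma Dn_pos : forall c b h s t, c <> 0 -> h <> 0 -> (s <> 0 \/ t <> 0) -> 0 < Dn c b h s t.
Proof.
  intros c b h s t Hc Hh Hst. unfold Dn.
  destruct (Req_dec s 0).
  - subst. destruct Hst as [|Ht]; [lra|].
    assert (0 < h*t*(h*t)). { assert (h*t <> 0) by (apply Rmult_integral_contrapositive; auto). nra. }
    replace (b*0+h*t) with (h*t) by ring. nra.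
  - assert (0 < c*c) by nra. assert (0 < s*s) by nra.
    pose proof (Rle_0_sqr (b*s+h*t)). unfold Rsqr in *. nra.
Qed.

Lemma Fc_cont : forall c b h (S T : R*R -> R) p, continuous S p -> continuous T p ->
  c <> 0 -> h <> 0 -> (S p <> 0 \/ T p <> 0) -> ctp (fun q => Fc c b h (S q) (T q)) p.
Proof.
  intros c b h S T p HS HT Hc Hh Hst.
  pose proof (Dn_pos c b h (S p) (T p) Hc Hh Hst).
  apply ctp_of; unfold Fc, Dn; cbn [fst snd]; unfold Dn in H; ctac; lra.
Qed.

Lemma Fc_bdry : forall c b s t, c <> 0 -> s <> 0 -> Fc c b s s t = inv2 (c, b + t).
Proof.
  intros c b s t Hc Hs. unfold Fc, Dn, inv2, uu, vv, rho; simpl.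
  assert (0 < c*c) by nra. assert (0 < s*s) by nra.
  pose proof (Rle_0_sqr (b+t)). unfold Rsqr in *.
  f_equal; field; nra.
Qed.

Lemma Fc_zero : forall c b h t, Fc c b h 0 t = (0,0).
Proof. intros. unfold Fc. f_equal; unfold Rdiv; ring. Qed.

Lemma Fc_X : forall n c b h s t, (1 <= n)%nat -> c = INR n / 2 -> h <> 0 -> X n (Fc c b h s t).
Proof.
  intros n c b h s t Hn Hc Hh. unfold X.
  assert (Hn' : 0 < INR n) by (apply lt_0_INR; lia).
  destruct (Req_dec s 0) as [E|E].
  - subst. rewrite Fc_zero. simpl. field. lra.
  - assert (HD := Dn_pos c b h s t ltac:(lra) Hh (or_introl E)).
    unfold Fc. simpl. unfold Dn in *. replace (INR n) with (2*c) by lra. field. lra.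
Qed.

Lemma Fc_norm2 : forall c b h s t, 0 < Dn c b h s t ->
  (fst (Fc c b h s t))^2 + (snd (Fc c b h s t))^2 = s*s / Dn c b h s t.
Proof. intros. unfold Fc; simpl. unfold Dn in *. field. lra. Qed.

Lemma circ_eq : forall q n, (0 < INR n) ->
  (fst q - / INR n)^2 + (snd q)^2 - (/ INR n)^2 = rho q - 2 * fst q / INR n.
Proof. intros. unfold rho. field. lra. Qed.

Lemma uu_rel : forall q, q <> (0,0) -> fst q = uu q * rho q.
Proof. intros. pose proof (rho_pos q H). unfold uu. field. lra. Qed.

Lemma in_circ_iff : forall q n, q <> (0,0) -> (0 < INR n) ->
  ((fst q - / INR n)^2 + (snd q)^2 <= (/ INR n)^2 <-> INR n / 2 <= uu q).
Proof.
  intros q n Hq Hn. pose proof (circ_eq q n Hn). pose proof (rho_pos q Hq).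
  pose proof (uu_rel q Hq).
  assert (E: rho q - 2 * fst q / INR n = rho q * (2 / INR n) * (INR n / 2 - uu q)).
  { rewrite H1. field. lra. }
  assert (0 < rho q * (2 / INR n)). { apply Rmult_lt_0_compat; auto. apply Rdiv_lt_0_compat; lra. }
  split; intro.
  - assert (rho q * (2 / INR n) * (INR n / 2 - uu q) <= 0) by lra. nra.
  - assert (rho q * (2 / INR n) * (INR n / 2 - uu q) <= 0) by nra. lra.
Qed.

Lemma in_circ_strict_iff : forall q n, q <> (0,0) -> (0 < INR n) ->
  ((fst q - / INR n)^2 + (snd q)^2 < (/ INR n)^2 <-> INR n / 2 < uu q).
Proof.
  intros q n Hq Hn. pose proof (circ_eq q n Hn). pose proof (rho_pos q Hq).
  pose proof (uu_rel q Hq).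
  assert (E: rho q - 2 * fst q / INR n = rho q * (2 / INR n) * (INR n / 2 - uu q)).
  { rewrite H1. field. lra. }
  assert (0 < rho q * (2 / INR n)). { apply Rmult_lt_0_compat; auto. apply Rdiv_lt_0_compat; lra. }
  split; intro.
  - assert (rho q * (2 / INR n) * (INR n / 2 - uu q) < 0) by lra. nra.
  - assert (rho q * (2 / INR n) * (INR n / 2 - uu q) < 0) by nra. lra.
Qed.

Lemma on_circ_iff : forall q n, q <> (0,0) -> (0 < INR n) ->
  (X n q <-> uu q = INR n / 2).
Proof.
  intros q n Hq Hn. unfold X. pose proof (circ_eq q n Hn). pose proof (rho_pos q Hq).
  pose proof (uu_rel q Hq).
  assert (E: rho q - 2 * fst q / INR n = rho q * (2 / INR n) * (INR n / 2 - uu q)).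
  { rewrite H1. field. lra. }
  assert (0 < rho q * (2 / INR n)). { apply Rmult_lt_0_compat; auto. apply Rdiv_lt_0_compat; lra. }
  split; intro.
  - assert (rho q * (2 / INR n) * (INR n / 2 - uu q) = 0) by lra.
    apply Rmult_integral in H4. destruct H4; lra.
  - assert (rho q * (2 / INR n) * (INR n / 2 - uu q) = 0) as Z0.
    { match goal with Hu : uu q = _ |- _ => rewrite Hu end. ring. } lra.
Qed.

Lemma intA_nz : forall n q, (1 <= n)%nat -> intA n q -> q <> (0,0).
Proof.
  intros n q Hn [H1 H2] E. subst. simpl in H2. lra.
Qed.

Lemma intA_uu : forall n q, (1 <= n)%nat -> intA n q -> INR n / 2 < uu q < INR (S n) / 2.
Proof.
  intros n q Hn H. pose proof (intA_nz n q Hn H) as Hq. destruct H as [H1 H2].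
  assert (0 < INR n) by (apply lt_0_INR; lia). assert (0 < INR (S n)) by (apply lt_0_INR; lia).
  split.
  - apply in_circ_strict_iff; auto.
  - destruct (Rlt_le_dec (uu q) (INR (S n) / 2)); auto.
    apply in_circ_iff in r; auto. lra.
Qed.

Lemma A_uu : forall n q, (1 <= n)%nat -> A n q -> q <> (0,0) -> INR n / 2 <= uu q <= INR (S n) / 2.
Proof.
  intros n q Hn [H1 H2] Hq.
  assert (0 < INR n) by (apply lt_0_INR; lia). assert (0 < INR (S n)) by (apply lt_0_INR; lia).
  split.
  - apply in_circ_iff; auto.
  - destruct (Rle_dec (uu q) (INR (S n) / 2)); auto.
    assert (INR (S n) / 2 < uu q) by lra. apply in_circ_strict_iff in H3; auto. lra.
Qed.

Definition kidx (q : pt) : nat := (Z.to_nat (up (2 * uu q)) - 1)%nat.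

Lemma kidx_eq : forall q n, INR n <= 2 * uu q < INR n + 1 -> kidx q = n.
Proof.
  intros q n H. unfold kidx.
  assert (E: up (2 * uu q) = Z.of_nat (S n)).
  { symmetry. apply tech_up; rewrite <- INR_IZR_INZ; rewrite S_INR; lra. }
  rewrite E. rewrite Nat2Z.id. lia.
Qed.

Lemma kidx_spec : forall q, 0 <= uu q -> INR (kidx q) <= 2 * uu q < INR (kidx q) + 1.
Proof.
  intros q Hu. unfold kidx. destruct (archimed (2 * uu q)) as [A1 A2].
  set (zz := up (2 * uu q)) in *.
  assert (Hz : (0 < zz)%Z). { apply lt_IZR. lra. }
  assert (E: INR (Z.to_nat zz - 1) = IZR zz - 1).
  { rewrite minus_INR by lia. rewrite INR_IZR_INZ. rewrite Z2Nat.id by lia. simpl. lra. }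
  rewrite E. lra.
Qed.

Lemma kidx_le : forall q (M : nat), uu q < (INR M + 1) / 2 -> (kidx q <= M)%nat.
Proof.
  intros q M H. unfold kidx. destruct (archimed (2 * uu q)) as [A1 A2].
  assert (Hz : (up (2 * uu q) < Z.of_nat M + 2)%Z).
  { apply lt_IZR. rewrite plus_IZR. rewrite <- INR_IZR_INZ. simpl. lra. }
  lia.
Qed.

Lemma inv2_norm : forall q, q <> (0,0) -> uu q ^ 2 + vv q ^ 2 = / rho q.
Proof. intros. pose proof (rho_pos q H). unfold uu, vv. unfold rho in *. field. lra. Qed.

Lemma d2_0_rho : forall q, dist2 (0,0) q * dist2 (0,0) q = rho q.
Proof. intros. rewrite d2_sq. unfold rho. simpl. ring. Qed.

Lemma paste (g g1 g2 : pt -> pt) p : ctp g1 p -> ctp g2 p -> g1 p = g p -> g2 p = g p ->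
  (exists d, 0 < d /\ forall q, dist2 p q < d -> g q = g1 q \/ g q = g2 q) -> ctp g p.
Proof.
  intros H1 H2 E1 E2 [d0 [Hd0 Hq]] e He.
  destruct (H1 e He) as [d1 [Hd1 P1]]. destruct (H2 e He) as [d2 [Hd2 P2]].
  exists (Rmin d0 (Rmin d1 d2)). split. repeat apply Rmin_pos; auto.
  intros q Hd. pose proof (Rmin_l d0 (Rmin d1 d2)). pose proof (Rmin_r d0 (Rmin d1 d2)).
  pose proof (Rmin_l d1 d2). pose proof (Rmin_r d1 d2).
  destruct (Hq q ltac:(lra)) as [F|F]; rewrite F.
  - rewrite <- E1. apply P1. lra.
  - rewrite <- E2. apply P2. lra.
Qed.

Lemma ctp_id p : ctp (fun q => q) p.
Proof. intros e He. exists e. split; auto. Qed.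

Lemma near_pos (S : R*R -> R) p : continuous S p -> 0 < S p ->
  exists d, 0 < d /\ forall q, dist2 p q < d -> 0 < S q.
Proof.
  intros Hc Hp. destruct (cont_to_eps S p Hc (S p) Hp) as [d [Hd P]].
  exists d. split; auto. intros q Hq. specialize (P q Hq). apply Rabs_def2 in P. lra.
Qed.

Lemma near_band (S : R*R -> R) p lo hi : continuous S p -> lo < S p < hi ->
  exists d, 0 < d /\ forall q, dist2 p q < d -> lo < S q < hi.
Proof.
  intros Hc Hp. destruct (cont_to_eps S p Hc (Rmin (S p - lo) (hi - S p))) as [d [Hd P]].
  { apply Rmin_pos; lra. }
  exists d. split; auto. intros q Hq. specialize (P q Hq). apply Rabs_def2 in P.
  pose proof (Rmin_l (S p - lo) (hi - S p)). pose proof (Rmin_r (S p - lo) (hi - S p)). lra.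
Qed.

Section Retract.
Variable z : nat -> pt.
Variable N : nat.
Hypothesis hz : forall n, (1 <= n)%nat -> intA n (z n).
Hypothesis hN : (1 <= N)%nat.

Definition aa k := uu (z k).
Definition bb k := vv (z k).
Definition Gp k q := Fc (INR (S k) / 2) (bb k) (INR (S k) / 2 - aa k) (uu q - aa k) (vv q - bb k).
Definition Gm k q := Fc (INR k / 2) (bb k) (INR k / 2 - aa k) (uu q - aa k) (vv q - bb k).
Definition Rk (k : nat) (q : pt) : pt := if Rle_dec 0 (uu q - aa k) then Gp k q else Gm k q.
Definition jj q := Nat.max N (kidx q).
Definition Piece (k : nat) (q : pt) := if Nat.eq_dec k N then q else Rk k q.
Definition Rmap q := Piece (jj q) q.

Lemma aa_bounds : forall k, (1 <= k)%nat -> INR k / 2 < aa k < INR (S k) / 2.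
Proof. intros. unfold aa. apply intA_uu; auto. Qed.

Lemma Rk_Y : forall k q, (1 <= k)%nat -> Y 1 (Rk k q).
Proof.
  intros k q Hk. pose proof (aa_bounds k Hk). unfold Rk, Gp, Gm.
  destruct (Rle_dec 0 (uu q - aa k)).
  - exists (S k). split; [lia|]. split; [lia|]. apply Fc_X; auto. lra.
  - exists k. split; [lia|]. split; [lia|]. apply Fc_X; auto. lra.
Qed.

Lemma Rk_left : forall k q, (1 <= k)%nat -> q <> (0,0) -> uu q = INR k / 2 -> Rk k q = q.
Proof.
  intros k q Hk Hq Hu. pose proof (aa_bounds k Hk). unfold Rk, Gm.
  assert (0 < INR k) by (apply lt_0_INR; lia).
  destruct (Rle_dec 0 (uu q - aa k)); [lra|].
  replace (INR k / 2 - aa k) with (uu q - aa k) by lra.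
  rewrite Fc_bdry by lra. rewrite <- Hu.
  replace (bb k + (vv q - bb k)) with (vv q) by ring. apply inv2_inv2; auto.
Qed.

Lemma Rk_right : forall k q, (1 <= k)%nat -> q <> (0,0) -> uu q = INR (S k) / 2 -> Rk k q = q.
Proof.
  intros k q Hk Hq Hu. pose proof (aa_bounds k Hk). unfold Rk, Gp.
  assert (0 < INR (S k)) by (apply lt_0_INR; lia).
  destruct (Rle_dec 0 (uu q - aa k)); [|lra].
  replace (INR (S k) / 2 - aa k) with (uu q - aa k) by lra.
  rewrite Fc_bdry by lra. rewrite <- Hu.
  replace (bb k + (vv q - bb k)) with (vv q) by ring. apply inv2_inv2; auto.
Qed.

Lemma neq_z_st : forall k q, (1 <= k)%nat -> q <> (0,0) -> q <> z k ->
  uu q - aa k <> 0 \/ vv q - bb k <> 0.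
Proof.
  intros k q Hk Hq Hne. pose proof (intA_nz k (z k) Hk (hz k Hk)).
  destruct (Req_dec (uu q - aa k) 0); [|now left].
  destruct (Req_dec (vv q - bb k) 0); [|now right].
  exfalso. apply Hne. rewrite <- (inv2_inv2 q Hq), <- (inv2_inv2 (z k) H).
  unfold inv2 at 2 4. unfold aa, bb in *. f_equal. f_equal; lra.
Qed.

Lemma Rk_cont : forall k q, (1 <= k)%nat -> q <> (0,0) -> q <> z k -> ctp (Rk k) q.
Proof.
  intros k q Hk Hq Hne. pose proof (aa_bounds k Hk).
  assert (0 < INR k) by (apply lt_0_INR; lia).
  assert (0 < INR (S k)) by (apply lt_0_INR; lia).
  pose proof (neq_z_st k q Hk Hq Hne) as Hst.
  assert (CS : continuous (fun q => uu q - aa k) q) by (apply cR_minus; [apply cont_uu; auto| apply cR_const]).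
  assert (CT : continuous (fun q => vv q - bb k) q) by (apply cR_minus; [apply cont_vv; auto| apply cR_const]).
  assert (Cp : ctp (Gp k) q). { unfold Gp. apply Fc_cont; auto; lra. }
  assert (Cm : ctp (Gm k) q). { unfold Gm. apply Fc_cont; auto; lra. }
  destruct (Rtotal_order (uu q - aa k) 0) as [Hs|[Hs|Hs]].
  - apply (paste _ (Gm k) (Gm k)); auto.
    + unfold Rk. destruct (Rle_dec 0 (uu q - aa k)); [lra|auto].
    + unfold Rk. destruct (Rle_dec 0 (uu q - aa k)); [lra|auto].
    + destruct (near_pos (fun q => - (uu q - aa k)) q) as [d [Hd P]].
      { apply cR_opp; auto. } { lra. }
      exists d. split; auto. intros q' Hq'. specialize (P q' Hq'). right.
      unfold Rk. destruct (Rle_dec 0 (uu q' - aa k)); [lra|auto].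
  - apply (paste _ (Gp k) (Gm k)); auto.
    + unfold Rk. destruct (Rle_dec 0 (uu q - aa k)); [auto|lra].
    + unfold Rk. destruct (Rle_dec 0 (uu q - aa k)); [|lra].
      unfold Gp, Gm. rewrite Hs. rewrite !Fc_zero. auto.
    + exists 1. split; [lra|]. intros q' _. unfold Rk. destruct (Rle_dec 0 (uu q' - aa k)); auto.
  - apply (paste _ (Gp k) (Gp k)); auto.
    + unfold Rk. destruct (Rle_dec 0 (uu q - aa k)); [auto|lra].
    + unfold Rk. destruct (Rle_dec 0 (uu q - aa k)); [auto|lra].
    + destruct (near_pos (fun q => uu q - aa k) q) as [d [Hd P]]; auto.
      exists d. split; auto. intros q' Hq'. specialize (P q' Hq'). left.
      unfold Rk. destruct (Rle_dec 0 (uu q' - aa k)); [auto|lra].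
Qed.



Lemma jj_N : forall q, uu q < (INR N + 1) / 2 -> jj q = N.
Proof. intros. unfold jj. pose proof (kidx_le q N H). lia. Qed.

Lemma jj_n : forall q n, (N < n)%nat -> INR n <= 2 * uu q < INR n + 1 -> jj q = n.
Proof. intros. unfold jj. rewrite (kidx_eq q n H0). lia. Qed.

Lemma jj_cases : forall q, (uu q < (INR N + 1) / 2 /\ jj q = N) \/
  ((N < jj q)%nat /\ INR (jj q) <= 2 * uu q < INR (jj q) + 1).
Proof.
  intros q. destruct (Rlt_le_dec (uu q) ((INR N + 1) / 2)).
  - left. split; auto. apply jj_N; auto.
  - right. assert (0 <= INR N) by apply pos_INR.
    pose proof (kidx_spec q ltac:(lra)) as Hk.
    assert (N < kidx q)%nat.
    { destruct (le_lt_dec (kidx q) N); auto. apply le_INR in l. lra. }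
    unfold jj. rewrite Nat.max_r by lia. split; auto.
Qed.

Lemma uu0 : uu (0,0) = 0.
Proof. unfold uu. simpl. unfold Rdiv. ring. Qed.

Lemma Rmap0 : Rmap (0,0) = (0,0).
Proof.
  unfold Rmap. rewrite jj_N. unfold Piece. destruct (Nat.eq_dec N N); auto. lia.
  rewrite uu0. assert (0 <= INR N) by apply pos_INR. lra.
Qed.

Lemma Rmap_Y : forall q, Y 1 q -> Rmap q = q.
Proof.
  intros q [i [_ [Hi Hx]]].
  destruct (classic (q = (0,0))) as [E|Hq]. { subst. apply Rmap0. }
  assert (0 < INR i) by (apply lt_0_INR; lia).
  apply on_circ_iff in Hx; auto.
  unfold Rmap. destruct (jj_cases q) as [[_ E]|[H1 H2]].
  - rewrite E. unfold Piece. destruct (Nat.eq_dec N N); [auto|lia].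
  - set (m := jj q) in *.
    assert (m = i).
    { rewrite Hx in H2.
      assert (G1: INR m < INR (S i)) by (rewrite S_INR; lra).
      assert (G2: INR i < INR (S m)) by (rewrite S_INR; lra).
      apply INR_lt in G1. apply INR_lt in G2. lia. }
    unfold Piece. destruct (Nat.eq_dec m N); [auto|].
    apply Rk_left; auto. lia. congruence.
Qed.

Lemma Y_Yup : forall q M, Y 1 q -> Yup M q.
Proof. intros. left. auto. Qed.

Lemma Rmap_Yup : forall q, HAset q -> Yup N (Rmap q).
Proof.
  intros q [M [HM HY]].
  unfold Rmap. destruct (jj_cases q) as [[Hu E]|[H1 H2]].
  - rewrite E. unfold Piece. destruct (Nat.eq_dec N N); [|lia].
    destruct HY as [HY|[i [Hi1 [Hi2 HA]]]]; [left; auto|].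
    destruct (classic (q = (0,0))) as [E0|Hq].
    { left. exists 1%nat. subst. split; [lia|]. split; [lia|]. unfold X. simpl. rewrite Rinv_1. ring. }
    destruct (le_lt_dec i N).
    + right. exists i. auto.
    + exfalso. pose proof (A_uu i q Hi1 HA Hq). assert (G: (S N <= i)%nat) by lia. apply le_INR in G. rewrite S_INR in G. lra.
  - unfold Piece. destruct (Nat.eq_dec (jj q) N); [lia|].
    left. apply Rk_Y; auto. lia.
Qed.


Lemma Rk_X : forall k q, (1 <= k)%nat -> X k (Rk k q) \/ X (S k) (Rk k q).
Proof.
  intros k q Hk. pose proof (aa_bounds k Hk). unfold Rk, Gp, Gm.
  destruct (Rle_dec 0 (uu q - aa k)).
  - right. apply Fc_X; auto. lra.
  - left. apply Fc_X; auto. lra.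
Qed.

Lemma X_norm : forall i q, (1 <= i)%nat -> X i q -> dist2 (0,0) q <= 2 / INR i.
Proof.
  intros i q Hi H. assert (0 < INR i) by (apply lt_0_INR; lia).
  unfold X in H. pose proof (disk_norm q (/ INR i) ltac:(apply Rinv_0_lt_compat; lra) ltac:(lra)).
  unfold Rdiv. lra.
Qed.

Lemma Rk_small : forall k e, (1 <= k)%nat -> 0 < e -> exists d, 0 < d /\ forall q, q <> (0,0) ->
  INR k <= 2 * uu q < INR k + 1 -> dist2 (0,0) q < d -> dist2 (0,0) (Rk k q) < e.
Proof.
  intros k e Hk He. pose proof (aa_bounds k Hk) as Ha. pose proof (pos_INR k) as Hpk. assert (Hk1 : 1 <= INR k) by (apply (le_INR 1); lia).
  set (a := aa k) in *. set (b := bb k).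
  set (hmin := Rmin (a - INR k / 2) (INR (S k) / 2 - a)).
  assert (Hh : 0 < hmin) by (apply Rmin_pos; lra).
  pose proof (Rmin_l (a - INR k / 2) (INR (S k) / 2 - a)) as Hm1.
  pose proof (Rmin_r (a - INR k / 2) (INR (S k) / 2 - a)) as Hm2. fold hmin in Hm1, Hm2.
  set (T0 := (/ (2 * e) + Rabs b / 2) / hmin).
  set (V0 := T0 + Rabs b).
  set (C := INR (S k) / 2).
  assert (HT0 : 0 <= T0). { unfold T0. apply Rdiv_le_0_compat; auto.
    pose proof (Rabs_pos b). assert (0 < / (2*e)) by (apply Rinv_0_lt_compat; lra). lra. }
  assert (HV0 : 0 <= V0) by (unfold V0; pose proof (Rabs_pos b); lra).
  assert (HC : 0 < C) by (unfold C; rewrite S_INR; pose proof (pos_INR k); lra).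
  exists (/ (V0 + C + 1)). split. { apply Rinv_0_lt_compat; lra. }
  intros q Hq Hs Hd.
  pose proof (rho_pos q Hq) as Hr. pose proof (d2_0_rho q) as Er. pose proof (d2_ge0 (0,0) q).
  pose proof (inv2_norm q Hq) as En.
  set (u := uu q) in *. set (v := vv q) in *.
  assert (Hu : 0 <= u <= C). { unfold C. rewrite S_INR in *. pose proof (pos_INR k). lra. }
  assert (Hrho : rho q < / (V0 + C + 1) * / (V0 + C + 1)).
  { rewrite <- Er. apply Rmult_le_0_lt_compat; lra. }
  assert (Hinv : (V0 + C + 1) * (V0 + C + 1) < / rho q).
  { replace ((V0 + C + 1) * (V0 + C + 1)) with (/ (/ (V0 + C + 1) * / (V0 + C + 1))).
    2: { field. lra. }
    assert (0 < / (V0 + C + 1)) by (apply Rinv_0_lt_compat; lra).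
    apply Rinv_lt_contravar; auto. apply Rmult_lt_0_compat; auto. apply Rmult_lt_0_compat; auto. }
  assert (Hv2 : V0 * V0 < v * v) by nra.
  assert (Hv : V0 < Rabs v).
  { destruct (Rle_lt_dec (Rabs v) V0); auto.
    assert (Hvv : Rabs v * Rabs v <= V0 * V0) by (pose proof (Rabs_pos v); nra).
    rewrite <- Rabs_mult in Hvv. rewrite Rabs_right in Hvv by (apply Rle_ge; nra). lra. }
  set (s := u - a). set (t := v - b).
  assert (Hsb : Rabs s < / 2).
  { unfold s. apply Rabs_def1; rewrite S_INR in *; lra. }
  assert (Ht : T0 < Rabs t).
  { unfold t. pose proof (Rabs_triang (v - b) b) as Htr. replace (v - b + b) with v in Htr by ring. unfold V0 in Hv. lra. }
  assert (key : forall h, hmin <= Rabs h -> 0 < Dn (h + a) b h s t ->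
            dist2 (0,0) (Fc (h + a) b h s t) < e).
  { intros h Hhh HD.
    assert (Hw : / (2 * e) < Rabs (b * s + h * t)).
    { pose proof (Rabs_triang (b*s + h*t) (- (b*s))) as Htr.
      replace (b * s + h * t + - (b * s)) with (h*t) in Htr by ring.
      rewrite Rabs_Ropp, Rabs_mult, Rabs_mult in Htr.
      assert (Rabs b * Rabs s <= Rabs b / 2).
      { pose proof (Rabs_pos b). nra. }
      assert (hmin * T0 = / (2*e) + Rabs b / 2) by (unfold T0; field; lra).
      assert (hmin * T0 <= Rabs h * Rabs t).
      { apply Rmult_le_compat; lra. }
      pose proof (Rabs_pos h). pose proof (Rabs_pos t). nra. }
    apply d2_lt; auto. change (fst (0,0)) with 0. change (snd (0,0)) with 0. rewrite !Rminus_0_l.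
    replace ((- fst (Fc (h + a) b h s t)) ^ 2 + (- snd (Fc (h + a) b h s t)) ^ 2)
      with ((fst (Fc (h + a) b h s t)) ^ 2 + (snd (Fc (h + a) b h s t)) ^ 2) by ring.
    rewrite Fc_norm2 by auto.
    apply (Rmult_lt_reg_r (Dn (h + a) b h s t)); auto.
    unfold Rdiv. rewrite Rmult_assoc, Rinv_l by lra. rewrite Rmult_1_r.
    assert (Hw2 : / (2*e) * / (2*e) < (b * s + h * t) * (b * s + h * t)).
    { pose proof (Rabs_pos (b*s+h*t)). assert (0 < / (2*e)) by (apply Rinv_0_lt_compat; lra).
      assert (Rabs (b*s+h*t) * Rabs (b*s+h*t) = (b*s+h*t)*(b*s+h*t)).
      { rewrite <- Rabs_mult. apply Rabs_right. apply Rle_ge, Rle_0_sqr. }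
      nra. }
    assert (Hs2 : s * s < / 4).
    { pose proof (Rabs_pos s).
      assert (Rabs s * Rabs s = s*s).
      { rewrite <- Rabs_mult. apply Rabs_right. apply Rle_ge, Rle_0_sqr. }
      nra. }
    assert (E4 : e * e * (/ (2 * e) * / (2 * e)) = / 4) by (field; lra).
    unfold Dn. pose proof (Rle_0_sqr ((h + a) * s)). unfold Rsqr in *. nra. }
  unfold Rk, Gp, Gm. fold a b. fold u v s t.
  destruct (Req_dec s 0) as [E0|E0].
  { destruct (Rle_dec 0 s); rewrite E0, Fc_zero, d2_refl; auto. }
  destruct (Rle_dec 0 s).
  - replace (INR (S k) / 2) with ((INR (S k) / 2 - a) + a) at 1 by ring.
    apply key. { rewrite Rabs_right; lra. }
    apply Dn_pos; [intro; lra|intro; lra|left; exact E0].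
  - replace (INR k / 2) with ((INR k / 2 - a) + a) at 1 by ring.
    apply key. { rewrite Rabs_left; lra. }
    apply Dn_pos; [intro; lra|intro; lra|left; exact E0].
Qed.


Lemma fin_small : forall e, 0 < e -> forall K, exists d, 0 < d /\ forall k q, (1 <= k)%nat -> (k < K)%nat ->
  q <> (0,0) -> INR k <= 2 * uu q < INR k + 1 -> dist2 (0,0) q < d -> dist2 (0,0) (Rk k q) < e.
Proof.
  intros e He K. induction K as [|K IH].
  - exists 1. split; [lra|]. intros. lia.
  - destruct IH as [d1 [Hd1 P1]].
    destruct (le_lt_dec 1 K) as [HK|HK].
    + destruct (Rk_small K e HK He) as [d2 [Hd2 P2]].
      exists (Rmin d1 d2). split. apply Rmin_pos; auto.
      intros k q Hk HkK Hq Hs Hd. pose proof (Rmin_l d1 d2). pose proof (Rmin_r d1 d2).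
      destruct (Nat.eq_dec k K).
      * subst. apply P2; auto. lra.
      * apply P1; auto. lia. lra.
    + exists d1. split; auto. intros k q Hk HkK. lia.
Qed.

Lemma Rmap_cont0 : ctp (Rmap) (0,0).
Proof.
  intros e He. rewrite Rmap0.
  destruct (archimed_cor1 (e/2)) as [K [HK1 HK2]]; [lra|].
  set (K' := Nat.max K (S N)).
  destruct (fin_small e He K') as [d1 [Hd1 P1]].
  exists (Rmin e d1). split. apply Rmin_pos; auto.
  intros q Hd. pose proof (Rmin_l e d1). pose proof (Rmin_r e d1).
  unfold Rmap. destruct (jj_cases q) as [[Hu E]|[H1 H2]].
  - rewrite E. unfold Piece. destruct (Nat.eq_dec N N); [|lia]. lra.
  - set (m := jj q) in *.
    assert (Hq : q <> (0,0)).
    { intro E0. subst q. rewrite uu0 in H2. assert (G: (1 <= m)%nat) by lia.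
      apply le_INR in G. simpl in G. lra. }
    unfold Piece. destruct (Nat.eq_dec m N); [lia|].
    destruct (le_lt_dec K' m).
    + destruct (Rk_X m q ltac:(lia)) as [HX|HX].
      * pose proof (X_norm m _ ltac:(lia) HX).
        assert (G: (K <= m)%nat) by lia. apply le_INR in G.
        assert (0 < INR K) by (apply lt_0_INR; lia).
        assert (2 / INR m <= 2 / INR K).
        { unfold Rdiv. apply Rmult_le_compat_l; [lra|]. apply Rinv_le_contravar; lra. }
        assert (2 / INR K < e). { unfold Rdiv. lra. }
        lra.
      * pose proof (X_norm (S m) _ ltac:(lia) HX).
        assert (G: (K <= S m)%nat) by lia. apply le_INR in G.
        assert (0 < INR K) by (apply lt_0_INR; lia).
        assert (2 / INR (S m) <= 2 / INR K).
        { unfold Rdiv. apply Rmult_le_compat_l; [lra|]. apply Rinv_le_contravar; lra. }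
        assert (2 / INR K < e). { unfold Rdiv. lra. }
        lra.
    + apply P1; auto. lia. lra.
Qed.

Lemma Piece_cont : forall k q, (N <= k)%nat -> q <> (0,0) -> (forall k, (N < k)%nat -> q <> z k) ->
  ctp (Piece k) q.
Proof.
  intros k q Hk Hq Hz. unfold Piece. destruct (Nat.eq_dec k N).
  - apply ctp_id.
  - apply Rk_cont; auto. lia. apply Hz. lia.
Qed.

Lemma Rmap_cont : forall q, q <> (0,0) -> (forall k, (N < k)%nat -> q <> z k) -> ctp (Rmap) q.
Proof.
  intros q Hq Hz. pose proof (cont_uu q Hq) as Cu.
  destruct (jj_cases q) as [[Hu E]|[H1 H2]].
  - apply (paste _ (fun q => q) (fun q => q)); [apply ctp_id|apply ctp_id| | |].
    + unfold Rmap. rewrite E. unfold Piece. destruct (Nat.eq_dec N N); [auto|lia].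
    + unfold Rmap. rewrite E. unfold Piece. destruct (Nat.eq_dec N N); [auto|lia].
    + destruct (near_band uu q (uu q - 1) ((INR N + 1)/2) Cu ltac:(lra)) as [d [Hd P]].
      exists d. split; auto. intros q' Hq'. left. specialize (P q' Hq').
      unfold Rmap. rewrite (jj_N q') by lra. unfold Piece. destruct (Nat.eq_dec N N); [auto|lia].
  - set (m := jj q) in *.
    destruct (Rlt_le_dec (INR m) (2 * uu q)) as [Hlt|Hle].
    + apply (paste _ (Piece m) (Piece m)); [apply Piece_cont; auto; lia|apply Piece_cont; auto; lia| | |]; auto.
      destruct (near_band uu q (INR m / 2) ((INR m + 1)/2) Cu ltac:(lra)) as [d [Hd P]].
      exists d. split; auto. intros q' Hq'. left. specialize (P q' Hq').
      unfold Rmap. rewrite (jj_n q' m) by (auto; lra). auto.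
    + assert (Hu : uu q = INR m / 2) by lra.
      assert (Hm1 : (1 <= m)%nat) by lia.
      assert (Em : INR (S (m - 1)) = INR m) by (f_equal; lia).
      assert (Rq : Rmap q = q).
      { unfold Rmap. fold m. unfold Piece. destruct (Nat.eq_dec m N); [lia|].
        apply Rk_left; auto. }
      apply (paste _ (Piece (m - 1)) (Piece m)).
      * apply Piece_cont; auto. lia.
      * apply Piece_cont; auto. lia.
      * rewrite Rq. unfold Piece. destruct (Nat.eq_dec (m-1) N); auto.
        apply Rk_right; auto. lia. rewrite Em. auto.
      * rewrite Rq. unfold Piece. destruct (Nat.eq_dec m N); [lia|].
        apply Rk_left; auto.
      * destruct (near_band uu q ((INR m - 1) / 2) ((INR m + 1)/2) Cu ltac:(lra)) as [d [Hd P]].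
        exists d. split; auto. intros q' Hq'. specialize (P q' Hq').
        assert (EmR : INR (m - 1) = INR m - 1) by (rewrite minus_INR by lia; simpl; lra).
        destruct (Rle_lt_dec (INR m) (2 * uu q')).
        -- right. unfold Rmap. rewrite (jj_n q' m) by (auto; lra). auto.
        -- left. unfold Rmap. destruct (Nat.eq_dec (m - 1) N) as [Em1|Em1].
           ++ rewrite Em1. rewrite (jj_N q'). auto. rewrite <- Em1, EmR. lra.
           ++ rewrite (jj_n q' (m-1)). auto. lia. rewrite EmR. lra.
Qed.
End Retract.

Lemma dep_choice {T : Type} (P : T -> T -> Prop) (x0 : T) : (forall x, exists y, P x y) ->
  exists s : nat -> T, s 0%nat = x0 /\ forall i, P (s i) (s (S i)).
Proof.
  intros H. set (f := fun x => proj1_sig (constructive_indefinite_description _ (H x))).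
  exists (fix s i := match i with 0%nat => x0 | S i => f (s i) end). split; auto.
  intros i. simpl. unfold f. apply proj2_sig.
Qed.

Lemma incr_ge : forall phi : nat -> nat, (forall i, (phi i < phi (S i))%nat) -> forall i, (i <= phi i)%nat.
Proof. intros phi H i. induction i. lia. specialize (H i). lia. Qed.

Lemma incr_mono : forall phi : nat -> nat, (forall i, (phi i < phi (S i))%nat) ->
  forall i j, (i <= j)%nat -> (phi i <= phi j)%nat.
Proof. intros phi H i j Hij. induction Hij. lia. specialize (H m). lia. Qed.

Lemma incr_comp : forall phi psi : nat -> nat, (forall i, (phi i < phi (S i))%nat) ->
  (forall i, (psi i < psi (S i))%nat) -> forall i, (phi (psi i) < phi (psi (S i)))%nat.
Proof.
  intros phi psi H1 H2 i. specialize (H2 i).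
  assert (G: (S (psi i) <= psi (S i))%nat) by lia.
  pose proof (incr_mono phi H1 _ _ G). specialize (H1 (psi i)). lia.
Qed.

Lemma cv_sub : forall u l (phi : nat -> nat), Un_cv u l -> (forall i, (phi i < phi (S i))%nat) ->
  Un_cv (fun i => u (phi i)) l.
Proof.
  intros u l phi Hu Hp e He. destruct (Hu e He) as [K HK]. exists K. intros n Hn.
  apply HK. pose proof (incr_ge phi Hp n). lia.
Qed.

Lemma BW1 : forall a : nat -> R, (forall n, -1 <= a n <= 1) ->
  exists (phi : nat -> nat) l, (forall i, (phi i < phi (S i))%nat) /\ Un_cv (fun i => a (phi i)) l.
Proof.
  intros a Ha.
  destruct (Bolzano_Weierstrass a (fun c => -1 <= c <= 1) (compact_P3 (-1) 1) Ha) as [l Hl].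
  assert (Step : forall x : nat * nat, exists y : nat * nat,
    fst y = S (fst x) /\ (snd x < snd y)%nat /\ Rabs (a (snd y) - l) < / INR (S (fst y))).
  { intros [i p].
    assert (Hpos : 0 < / INR (S (S i))) by (apply Rinv_0_lt_compat, lt_0_INR; lia).
    assert (Hnb : neighbourhood (disc l (mkposreal _ Hpos)) l).
    { exists (mkposreal _ Hpos). intros y Hy. exact Hy. }
    destruct (Hl (disc l (mkposreal _ Hpos)) (S p) Hnb) as [p' [Hp' Hv]].
    exists (S i, p'). simpl. refine (conj eq_refl (conj _ _)); [lia| exact Hv]. }
  destruct (dep_choice _ (0%nat, 0%nat) Step) as [s [Hs0 Hs]].
  assert (Hfst : forall i, fst (s i) = i).
  { induction i. rewrite Hs0; auto. destruct (Hs i) as [E _]. rewrite E, IHi. auto. }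
  exists (fun i => snd (s (S i))), l. split.
  - intros i. apply (Hs (S i)).
  - intros e He. destruct (archimed_cor1 e He) as [K [HK1 HK2]]. exists K. intros n Hn.
    unfold R_dist. destruct (Hs n) as [_ [_ B]]. rewrite Hfst in B.
    assert (0 < INR K) by (apply lt_0_INR; lia).
    assert (INR K <= INR (S (S n))) by (apply le_INR; lia).
    assert (/ INR (S (S n)) <= / INR K) by (apply Rinv_le_contravar; lra). lra.
Qed.

Lemma cv_ge : forall u l lo, Un_cv u l -> (forall n, lo <= u n) -> lo <= l.
Proof.
  intros u l lo Hu H. destruct (Rle_lt_dec lo l); auto.
  destruct (Hu (lo - l)) as [K HK]; [lra|]. specialize (HK K (le_n K)). specialize (H K).
  unfold R_dist in HK. apply Rabs_def2 in HK. lra.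
Qed.

Lemma cv_le : forall u l hi, Un_cv u l -> (forall n, u n <= hi) -> l <= hi.
Proof.
  intros u l hi Hu H. destruct (Rle_lt_dec l hi); auto.
  destruct (Hu (l - hi)) as [K HK]; [lra|]. specialize (HK K (le_n K)). specialize (H K).
  unfold R_dist in HK. apply Rabs_def2 in HK. lra.
Qed.

Lemma d3_le_sum : forall x y : pt3, dist3 x y <=
  Rabs (fst (fst x) - fst (fst y)) + Rabs (snd (fst x) - snd (fst y)) + Rabs (snd x - snd y).
Proof.
  intros. unfold dist3.
  set (a := fst (fst x) - fst (fst y)). set (b := snd (fst x) - snd (fst y)). set (c := snd x - snd y).
  pose proof (Rabs_pos a). pose proof (Rabs_pos b). pose proof (Rabs_pos c).
  assert (Ea : Rabs a * Rabs a = a^2) by (rewrite <- Rabs_mult; rewrite Rabs_right; [ring|apply Rle_ge, Rle_0_sqr]).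
  assert (Eb : Rabs b * Rabs b = b^2) by (rewrite <- Rabs_mult; rewrite Rabs_right; [ring|apply Rle_ge, Rle_0_sqr]).
  assert (Ec : Rabs c * Rabs c = c^2) by (rewrite <- Rabs_mult; rewrite Rabs_right; [ring|apply Rle_ge, Rle_0_sqr]).
  rewrite <- (sqrt_square (Rabs a + Rabs b + Rabs c)) by lra.
  apply sqrt_le_1_alt. nra.
Qed.

Lemma BW_cyl : forall x : nat -> pt3, (forall n, cyl (x n)) ->
  exists (psi : nat -> nat) xs, (forall i, (psi i < psi (S i))%nat) /\ cyl xs /\
    forall e, 0 < e -> exists I, forall i, (I <= i)%nat -> dist3 xs (x (psi i)) < e.
Proof.
  intros x Hx.
  set (c1 := fun n => fst (fst (x n))). set (c2 := fun n => snd (fst (x n))). set (c3 := fun n => snd (x n)).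
  assert (B1 : forall n, -1 <= c1 n <= 1).
  { intros n. destruct (Hx n) as [HS _]. unfold S1 in HS. unfold c1.
    pose proof (pow2_ge_0 (snd (fst (x n)))). split; nra. }
  assert (B2 : forall n, -1 <= c2 n <= 1).
  { intros n. destruct (Hx n) as [HS _]. unfold S1 in HS. unfold c2.
    pose proof (pow2_ge_0 (fst (fst (x n)))). split; nra. }
  assert (B3 : forall n, 0 <= c3 n <= 1) by (intros n; destruct (Hx n) as [_ H]; exact H).
  destruct (BW1 c1 B1) as [p1 [l1 [I1 C1]]].
  destruct (BW1 (fun i => c2 (p1 i)) (fun i => B2 _)) as [p2 [l2 [I2 C2]]].
  destruct (BW1 (fun i => c3 (p1 (p2 i))) (fun i => ltac:(pose proof (B3 (p1 (p2 i))); lra))) as [p3 [l3 [I3 C3]]].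
  set (psi := fun i => p1 (p2 (p3 i))).
  assert (Ipsi : forall i, (psi i < psi (S i))%nat).
  { intros i. unfold psi. apply (incr_comp p1 (fun i => p2 (p3 i))); auto. intros j. apply (incr_comp p2 p3); auto. }
  assert (D1 : Un_cv (fun i => c1 (psi i)) l1).
  { apply (cv_sub (fun i => c1 (p1 i)) l1 (fun i => p2 (p3 i))); auto. intros j. apply (incr_comp p2 p3); auto. }
  assert (D2 : Un_cv (fun i => c2 (psi i)) l2).
  { apply (cv_sub (fun i => c2 (p1 (p2 i))) l2 p3); auto. }
  assert (D3 : Un_cv (fun i => c3 (psi i)) l3) by exact C3.
  exists psi, ((l1, l2), l3). split; auto. split.
  - split.
    + unfold S1. simpl.
      assert (Hc : Un_cv (fun i => c1 (psi i) * c1 (psi i) + c2 (psi i) * c2 (psi i)) (l1 * l1 + l2 * l2)).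
      { apply CV_plus; apply CV_mult; auto. }
      assert (Hc1 : Un_cv (fun i => c1 (psi i) * c1 (psi i) + c2 (psi i) * c2 (psi i)) 1).
      { intros e He. exists 0%nat. intros n _. unfold R_dist.
        destruct (Hx (psi n)) as [HS _]. unfold S1 in HS. unfold c1, c2.
        replace (fst (fst (x (psi n))) * fst (fst (x (psi n))) + snd (fst (x (psi n))) * snd (fst (x (psi n))) - 1) with 0 by (rewrite <- HS; ring).
        rewrite Rabs_R0. auto. }
      pose proof (UL_sequence _ _ _ Hc Hc1). simpl. lra.
    + simpl. split.
      * apply (cv_ge _ _ 0 D3). intros n. apply B3.
      * apply (cv_le _ _ 1 D3). intros n. apply B3.
  - intros e He.
    destruct (D1 (e/3)) as [K1 HK1]; [lra|]. destruct (D2 (e/3)) as [K2 HK2]; [lra|].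
    destruct (D3 (e/3)) as [K3 HK3]; [lra|].
    exists (Nat.max K1 (Nat.max K2 K3)). intros i Hi.
    specialize (HK1 i ltac:(lia)). specialize (HK2 i ltac:(lia)). specialize (HK3 i ltac:(lia)).
    unfold R_dist in *. pose proof (d3_le_sum ((l1,l2),l3) (x (psi i))). simpl in H.
    unfold c1, c2, c3 in *. rewrite Rabs_minus_sym in HK1, HK2, HK3. lra.
Qed.

Lemma Yup_mono : forall M M' q, (M <= M')%nat -> Yup M q -> Yup M' q.
Proof.
  intros M M' q HM [H|[i [H1 [H2 H3]]]]. left; auto. right. exists i. split; auto. split; [lia|auto].
Qed.

Lemma notYup : forall M q, HAset q -> ~ Yup M q -> exists m, (M < m)%nat /\ (1 <= m)%nat /\ intA m q.
Proof.
  intros M q [N0 [HN0 [HY|[i [Hi1 [Hi2 HA]]]]]] Hn.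
  - exfalso. apply Hn. left. auto.
  - destruct (le_lt_dec i M).
    + exfalso. apply Hn. right. exists i. auto.
    + exists i. split; auto. split; auto.
      destruct HA as [A1 A2]. split.
      * destruct (Rlt_le_dec ((fst q - / INR i)^2 + (snd q)^2) ((/ INR i)^2)); auto.
        exfalso. apply Hn. left. exists i. split; [lia|]. split; auto. unfold X. lra.
      * destruct (Rlt_le_dec ((/ INR (S i))^2) ((fst q - / INR (S i))^2 + (snd q)^2)); auto.
        exfalso. apply Hn. left. exists (S i). split; [lia|]. split; [lia|]. unfold X. lra.
Qed.

Lemma A_norm : forall m q, (1 <= m)%nat -> A m q -> dist2 (0,0) q <= 2 / INR m.
Proof.
  intros m q Hm [H1 _]. assert (0 < INR m) by (apply lt_0_INR; lia).
  pose proof (disk_norm q (/ INR m) ltac:(apply Rinv_0_lt_compat; lra) H1). unfold Rdiv. lra.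
Qed.

Lemma intA_A : forall m q, intA m q -> A m q.
Proof. intros m q [H1 H2]. split; lra. Qed.

Lemma incr_inj : forall phi : nat -> nat, (forall i, (phi i < phi (S i))%nat) ->
  forall i j, phi i = phi j -> i = j.
Proof.
  intros phi H i j E. destruct (Nat.lt_trichotomy i j) as [L|[L|L]]; auto.
  - assert (G: (S i <= j)%nat) by lia. pose proof (incr_mono phi H _ _ G). specialize (H i). lia.
  - assert (G: (S j <= i)%nat) by lia. pose proof (incr_mono phi H _ _ G). specialize (H j). lia.
Qed.

Lemma fchoice {A B : Type} (P : A -> B -> Prop) : (forall a, exists b, P a b) -> exists f : A -> B, forall a, P a (f a).
Proof.
  intros H. exists (fun a => proj1_sig (constructive_indefinite_description _ (H a))).
  intros a. apply proj2_sig.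
Qed.

Lemma partA (O : (pt -> Prop) -> Prop) (HO : HA_topology O) (H : pt3 -> pt) :
  cont_cyl_top O H -> (forall x, cyl x -> HAset (H x)) -> cont_cyl_euc H.
Proof.
  intros Hc Him x cx e He.
  destruct HO as [Htop [Hinh [[z0 [hz0 _]] Hc2]]].
  apply NNPP; intro Hn.
  assert (Hbad : forall j : nat, exists y, cyl y /\ dist3 x y < / (INR j + 1) /\ e <= dist2 (H x) (H y)).
  { intro j. apply NNPP; intro Hj. apply Hn. exists (/ (INR j + 1)). split.
    { apply Rinv_0_lt_compat. pose proof (pos_INR j). lra. }
    intros y cy dy. apply Rnot_le_lt; intro. apply Hj. exists y. auto. }
  destruct (fchoice _ Hbad) as [yy Hyy].
  assert (F1 : forall U, O U -> U (H x) -> exists J, forall j, (J <= j)%nat -> U (H (yy j))).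
  { intros U HU HUx. destruct (Hc U HU x cx HUx) as [d [Hd Pd]].
    destruct (archimed_cor1 d Hd) as [J [HJ1 HJ2]]. exists J. intros j Hj.
    destruct (Hyy j) as [cy [dy _]]. apply Pd; auto.
    assert (0 < INR J) by (apply lt_0_INR; lia).
    assert (INR J <= INR j + 1) by (apply le_INR in Hj; lra).
    assert (/ (INR j + 1) <= / INR J) by (apply Rinv_le_contravar; lra). lra. }
  destruct (Him x cx) as [M0 [HM0 HYM0]].
  destruct (classic (exists M, (M0 <= M)%nat /\ forall J, exists j, (J <= j)%nat /\ Yup M (H (yy j))))
    as [[M [HM HY]]|Hno].
  - set (V := fun q => Yup M q /\ dist2 (H x) q < e).
    assert (HM1 : (1 <= M)%nat) by lia.
    destruct (Hinh M HM1 V (fun p Vp => proj1 Vp)) as [_ back].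
    assert (Hop : euc_rel_open (Yup M) V).
    { split. intros p [Hp _]; auto.
      intros p [Hp Hdp]. exists (e - dist2 (H x) p). split; [lra|].
      intros q Hq Hpq. split; auto. pose proof (d2_tri (H x) p q). lra. }
    destruct (back Hop) as [U [HU HUV]].
    assert (HUx : U (H x)).
    { apply (HUV (H x)). split. apply (Yup_mono M0); auto. rewrite d2_refl. lra. }
    destruct (F1 U HU HUx) as [J HJ].
    destruct (HY J) as [j [Hj HYj]].
    assert (V (H (yy j))) as [_ Hlt]. { apply HUV. split; auto. }
    destruct (Hyy j) as [_ [_ Hge]]. lra.
  - assert (Hall : forall M, (M0 <= M)%nat -> exists J, forall j, (J <= j)%nat -> ~ Yup M (H (yy j))).
    { intros M HM. apply NNPP; intro C. apply Hno. exists M. split; auto. intros J.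
      apply NNPP; intro C2. apply C. exists J. intros j Hj HYj. apply C2. exists j. auto. }
    assert (Step : forall p : nat * nat, exists p' : nat * nat, (fst p < fst p')%nat /\ (snd p < snd p')%nat /\
       (1 <= snd p')%nat /\ intA (snd p') (H (yy (fst p')))).
    { intros [j m]. destruct (Hall (Nat.max m M0) ltac:(lia)) as [J HJ].
      set (j' := Nat.max J (S j)).
      destruct (Hyy j') as [cy _].
      destruct (notYup (Nat.max m M0) (H (yy j')) (Him _ cy) (HJ j' ltac:(lia))) as [m' [Hm1 [Hm2 Hm3]]].
      exists (j', m'). simpl. split; [lia|]. split; [lia|]. split; auto. }
    destruct (dep_choice _ (0%nat,0%nat) Step) as [s [Hs0 Hs]].
    set (jj := fun i => fst (s (S i))). set (mm := fun i => snd (s (S i))).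
    assert (Ijj : forall i, (jj i < jj (S i))%nat) by (intro i; apply (Hs (S i))).
    assert (Imm : forall i, (mm i < mm (S i))%nat) by (intro i; apply (Hs (S i))).
    assert (Amm : forall i, (1 <= mm i)%nat /\ intA (mm i) (H (yy (jj i)))).
    { intro i. destruct (Hs i) as [_ [_ [A1 A2]]]. split; auto. }
    set (y' := fun n => match excluded_middle_informative (exists i, mm i = n) with
           | left E => H (yy (jj (proj1_sig (constructive_indefinite_description _ E))))
           | right _ => z0 n end).
    assert (Ey : forall i, y' (mm i) = H (yy (jj i))).
    { intro i. unfold y'. destruct (excluded_middle_informative (exists i0, mm i0 = mm i)) as [E|E].
      - destruct (constructive_indefinite_description _ E) as [i' Hi']. simpl.
        rewrite (incr_inj mm Imm i' i Hi'). auto.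
      - exfalso. apply E. exists i. auto. }
    assert (Hy' : forall n, (1 <= n)%nat -> intA n (y' n)).
    { intros n Hn1. unfold y'. destruct (excluded_middle_informative (exists i, mm i = n)) as [E|E].
      - destruct (constructive_indefinite_description _ E) as [i' Hi']. simpl. subst n. apply Amm.
      - apply hz0; auto. }
    assert (Hsl : subseq_limit O y' (H x)).
    { exists mm. split. apply Amm. split; auto.
      intros U HU HUx. destruct (F1 U HU HUx) as [J HJ]. exists J. intros k Hk.
      rewrite Ey. apply HJ. pose proof (incr_ge jj Ijj k). lia. }
    pose proof (Hc2 y' (H x) Hy' (Him x cx) Hsl) as H0.
    destruct (archimed_cor1 (e/2)) as [K [HK1 HK2]]; [lra|].
    destruct (Hyy (jj K)) as [_ [_ Hge]]. rewrite H0 in Hge.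
    destruct (Amm K) as [Am1 Am2].
    pose proof (A_norm (mm K) _ Am1 (intA_A _ _ Am2)).
    assert (G: (K <= mm K)%nat) by apply (incr_ge mm Imm).
    apply le_INR in G. assert (0 < INR K) by (apply lt_0_INR; lia).
    assert (2 / INR (mm K) <= 2 / INR K).
    { unfold Rdiv. apply Rmult_le_compat_l; [lra|]. apply Rinv_le_contravar; lra. }
    unfold Rdiv in *. lra.
Qed.

Lemma partB (O : (pt -> Prop) -> Prop) (H : pt3 -> pt) (z : nat -> pt) :
  cont_cyl_top O H -> (forall x, cyl x -> HAset (H x)) ->
  (forall p, HAset p -> ~ subseq_limit O z p) ->
  exists N, (1 <= N)%nat /\ forall x, cyl x -> forall k, (N < k)%nat -> H x <> z k.
Proof.
  intros Hc Him hnl. apply NNPP; intro C.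
  assert (Hall : forall N, exists x k, cyl x /\ (N < k)%nat /\ H x = z k).
  { intros N. apply NNPP; intro C2. apply C. exists (S N). split; [lia|].
    intros x cx k Hk E. apply C2. exists x, k. split; auto. split; [lia|auto]. }
  assert (Step : forall p : pt3 * nat, exists p' : pt3 * nat, (snd p < snd p')%nat /\ cyl (fst p') /\ H (fst p') = z (snd p')).
  { intros [x k]. destruct (Hall k) as [x' [k' [A1 [A2 A3]]]]. exists (x', k'). simpl. auto. }
  destruct (dep_choice _ (((0,0),0), 0%nat) Step) as [s [Hs0 Hs]].
  set (xs := fun i => fst (s (S i))). set (ks := fun i => snd (s (S i))).
  assert (Iks : forall i, (ks i < ks (S i))%nat) by (intro i; apply (Hs (S i))).
  assert (Cxs : forall i, cyl (xs i)) by (intro i; apply (Hs i)).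
  assert (Exs : forall i, H (xs i) = z (ks i)) by (intro i; apply (Hs i)).
  assert (Ks0 : (1 <= ks 0)%nat). { destruct (Hs 0%nat) as [A1 _]. rewrite Hs0 in A1. simpl in A1. change (ks 0%nat) with (snd (s 1%nat)). exact A1. }
  destruct (BW_cyl xs Cxs) as [psi [xst [Ipsi [Cst Conv]]]].
  apply (hnl (H xst) (Him xst Cst)).
  exists (fun i => ks (psi i)). split.
  { pose proof (incr_mono ks Iks 0%nat (psi 0%nat) ltac:(lia)). lia. }
  split. { intros i. apply incr_comp; auto. }
  intros U HU HUx. destruct (Hc U HU xst Cst HUx) as [d [Hd Pd]].
  destruct (Conv d Hd) as [I HI]. exists I. intros k Hk. rewrite <- Exs. apply Pd; auto.
Qed.

Theorem lemma4 (O : (pt -> Prop) -> Prop) (HO : HA_topology O)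
  (f : pt -> pt) (hf : cont_S1 f) (hfY : forall z, S1 z -> Y 1 (f z)) :
  inessential_HA O f <-> exists N, (1 <= N)%nat /\ inessential_euc (Yup N) f.
Proof.
  split.
  - intros [H [c [Hc [Hcont [Him [H0 H1]]]]]].
    pose proof (partA O HO H Hcont Him) as Heuc.
    destruct HO as [Htop [Hinh [[z [hz hnl]] Hc2]]].
    destruct (partB O H z Hcont Him hnl) as [N [HN Hav]].
    exists N. split; auto.
    exists (fun x => Rmap z N (H x)), (Rmap z N c). split; [|split; [|split; [|split]]].
    + apply Rmap_Yup; auto.
    + intros x cx e He.
      assert (Cr : ctp (Rmap z N) (H x)).
      { destruct (classic (H x = (0,0))) as [E|E].
        - rewrite E. apply Rmap_cont0; auto.
        - apply Rmap_cont; auto; intros k Hk; apply Hav; auto. }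
      destruct (Cr e He) as [d1 [Hd1 P1]].
      destruct (Heuc x cx d1 Hd1) as [d [Hd P]].
      exists d. split. exact Hd. intros y cy dy. cbv beta. apply (P1 (H y)). apply P; auto.
    + intros x cx. apply Rmap_Yup; auto.
    + intros w Hw. rewrite H0 by auto. apply Rmap_Y; auto.
    + intros w Hw. rewrite H1 by auto. auto.
  - intros [N [HN [H [c [Hc [Hce [Him [H0 H1]]]]]]]].
    exists H, c. split; [exists N; auto|]. split; [|split; [|split]]; auto.
    + intros U HU x cx HUx.
      destruct HO as [_ [Hinh _]].
      destruct (Hinh N HN (fun p => U p /\ Yup N p) (fun p Hp => proj2 Hp)) as [fwd _].
      destruct (fwd (ex_intro _ U (conj HU (fun p => iff_refl _)))) as [_ Hop].
      destruct (Hop (H x) (conj HUx (Him x cx))) as [e [He Pe]].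
      destruct (Hce x cx e He) as [d [Hd Pd]].
      exists d. split; auto. intros y cy dy.
      destruct (Pe (H y) (Him y cy) (Pd y cy dy)) as [HU' _]. auto.
    + intros x cx. exists N. auto.
Qed.
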